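(* Let $T$ satisfy Condition 1 and let $U$ be a quantization of $T$ with respect to the partition $\mathcal M_\Bbbk$ of $[0,1]$ into $N_\Bbbk$ equal intervals. Let $X\subset[0,1]$ be an interval (or a finite union of intervals) such that all endpoints of $X$ and all endpoints of $T^{-1}X$ belong to the set of endpoints of the intervals of $\mathcal M_\Bbbk$. Then $$U^{-1}P_XU=P_{T^{-1}X},$$ where for a set $Y$ of this kind $P_Y=\mathrm{Op}_\Bbbk(\chi_Y)$ with $\chi_Y$ the characteristic function of $Y$.
   Context: Condition 1: $T:[0,1]\to[0,1]$, integers $\Lambda_1,\dots,\Lambda_l\geq2$ with $\sum\Lambda_j^{-1}=1$, consecutive intervals $I_1,\dots,I_l$ with $|I_j|=\Lambda_j^{-1}$, $T$ affine with slope $\Lambda_j$ on $I_j$ mapping $I_j$ onto $[0,1]$. $\mathcal M_\Bbbk$ consists of $E_i=[(i-1)/N_\Bbbk,i/N_\Bbbk]$, $i=1,\dots,N_\Bbbk$, where all endpoints of the $I_j$ are endpoints of intervals of $\mathcal M_\Bbbk$. With $B_\Bbbk(i,j)=|E_i\cap T^{-1}E_j|/|E_i|$, a quantization is a unitary $N_\Bbbk\times N_\Bbbk$ matrix $U$ with $B_\Bbbk(j,i)=|U(i,j)|^2$ for all $i,j$. $\mathrm{Op}_\Bbbk(f)$ is the diagonal matrix with $(i,i)$ entry equal to the average $N_\Bbbk\int_{E_i}f\,dx$ (so $P_Y$ is the orthogonal projection onto the coordinates $i$ with $E_i\subseteq Y$). *)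

(* Defs.v *)
From HB Require Import structures.
From mathcomp Require Import all_boot all_order all_algebra.
From mathcomp Require Import all_classical all_reals all_analysis.
From mathcomp Require Import complex.
Set Implicit Arguments. Unset Strict Implicit. Unset Printing Implicit Defensive.
Import Order.TTheory GRing.Theory Num.Theory.
Import numFieldNormedType.Exports.
Local Open Scope classical_set_scope.
Local Open Scope ring_scope.
Local Open Scope complex_scope.

Section Defs.
Variable R : realType.

(* left endpoint of I_j (0-based): a_j = sum_{k<j} 1/Lambda_k; a_0 = 0, a_l = 1 *)
Definition brk (l : nat) (Lam : 'I_l -> nat) (j : nat) : R :=
  \sum_(k < l | (k < j)%N) ((Lam k)%:R)^-1.

Definition grid_pt (N : nat) (x : R) : Prop :=
  exists i : nat, (i <= N)%N /\ x = i%:R / N%:R.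

(* Condition 1, together with the compatibility of the partition M_k *)
Definition condition1 (l : nat) (Lam : 'I_l -> nat) (T : R -> R) (N : nat) : Prop :=
  [/\ (forall j, 2 <= Lam j)%N,
      \sum_(j < l) ((Lam j)%:R)^-1 = (1 : R),
      (forall x, 0 <= x <= 1 -> 0 <= T x <= 1),
      (forall (j : 'I_l) x, brk Lam j < x < brk Lam j.+1 ->
           T x = (Lam j)%:R * (x - brk Lam j)) &
      (0 < N)%N /\ (forall j, (j <= l)%N -> grid_pt N (brk Lam j))].

Definition cell (N : nat) (i : 'I_N) : set R :=
  `[(i%:R / N%:R), (i.+1%:R / N%:R)].

Definition leb := (@lebesgue_measure R).

Definition len (A : set R) : R := fine (leb A).

Definition Bmat (T : R -> R) (N : nat) (i j : 'I_N) : R :=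
  len (cell i `&` (T @^-1` cell j)) / len (cell i).

Definition adjoint (N : nat) (U : 'M[R[i]]_N) : 'M[R[i]]_N :=
  (map_mx Num.conj U)^T.

Definition unitary (N : nat) (U : 'M[R[i]]_N) : Prop :=
  adjoint U *m U = 1%:M.

Definition quantization (T : R -> R) (N : nat) (U : 'M[R[i]]_N) : Prop :=
  unitary U /\ forall i j : 'I_N, `|U i j| ^+ 2 = (Bmat T j i)%:C.

(* Op_k(f) for f = chi_Y: diagonal with (i,i) entry N * int_{E_i} chi_Y = N |E_i /\ Y| *)
Definition Pproj (N : nat) (Y : set R) : 'M[R[i]]_N :=
  diag_mx (\row_i ((N%:R * len (cell i `&` Y))%:C)).

Definition grid_union (N : nat) (Y : set R) : Prop :=
  exists (m : nat) (lo hi : 'I_m -> R) (bl br : 'I_m -> bool),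
    (forall k, grid_pt N (lo k) /\ grid_pt N (hi k)) /\
    Y = \bigcup_(k in [set: 'I_m])
          [set x | x \in Interval (BSide (bl k) (lo k)) (BSide (br k) (hi k))].

(* T^{-1} Y, T viewed as a map [0,1] -> [0,1] *)
Definition preimT (T : R -> R) (Y : set R) : set R := `[0, 1] `&` (T @^-1` Y).

End Defs.

(* Main.v *)
Require Import Defs.
From HB Require Import structures.
From mathcomp Require Import all_boot all_order all_algebra.
From mathcomp Require Import all_classical all_reals all_analysis.
From mathcomp Require Import complex.
Import Order.TTheory GRing.Theory Num.Theory.
Local Open Scope classical_set_scope.
Local Open Scope ring_scope.

Section Aux.
Variable R : realType.

Lemma fin_null (s : seq R) (S : set R) :
  S `<=` [set x | x \in s] -> measurable S /\ (lebesgue_measure S = 0)%E.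
Proof.
elim: s S => [|p s IH] S HS.
  have -> : S = set0 by apply/seteqP; split => x // /HS.
  by split; [exact: measurable0 | exact: measure0].
have HS' : S `\ p `<=` [set x | x \in s].
  move=> x [/HS /=]; rewrite inE => /orP[/eqP -> //|//].
have [m0 l0] := IH _ HS'.
have mp : measurable (S `&` [set p]).
  case: (pselect (S p)) => Sp.
    have -> : S `&` [set p] = [set p] by apply/seteqP; split => x; [case|move=> /= ->].
    exact: measurable_set1.
  have -> : S `&` [set p] = set0 by apply/seteqP; split => x // [Sx /= xp]; apply: Sp; rewrite -xp.
  exact: measurable0.
have lp : (lebesgue_measure (S `&` [set p]) = 0)%E.
  apply/eqP; rewrite eq_le measure_ge0 andbT -(lebesgue_measure_set1 p).
  apply: le_measure; [by rewrite inE | rewrite inE; exact: measurable_set1 | by move=> x []].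
have eS : S = (S `&` [set p]) `|` (S `\ p).
  apply/seteqP; split => x.
    move=> Sx; case: (pselect (x = p)) => [xp|xp]; [left|right]; split => //.
  by move=> [[]|[]].
split; first by rewrite eS; exact: measurableU.
apply/eqP; rewrite eq_le measure_ge0 andbT eS.
apply: (le_trans (measureU2 _ _ _)) => //.
by move: lp l0 => /= -> ->; rewrite adde0.
Qed.


Lemma leb_oo (a b : R) : a < b -> lebesgue_measure `]a, b[ = (b - a)%:E.
Proof. by move=> ab; rewrite lebesgue_measure_itv /= lte_fin ab. Qed.

Lemma itv_weak {b b' : bool} {lo hi x : R} :
  x \in Interval (BSide b lo) (BSide b' hi) -> lo <= x <= hi.
Proof.
by case: b; case: b'; rewrite in_itv /= => /andP[h1 h2];
  rewrite ?h1 ?h2 ?(ltW h1) ?(ltW h2).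
Qed.

Lemma itv_strict {b b' : bool} {lo hi x : R} :
  lo < x < hi -> x \in Interval (BSide b lo) (BSide b' hi).
Proof.
by move=> /andP[h1 h2]; case: b; case: b'; rewrite in_itv /=
  ?h1 ?h2 ?(ltW h1) ?(ltW h2).
Qed.

Variable N : nat.
Hypothesis N0 : (0 < N)%N.

Lemma ltN (a b : nat) : (a%:R / N%:R < b%:R / N%:R :> R) = (a < b)%N.
Proof.
by rewrite ltr_pM2r ?ltr_nat // invr_gt0 ltr0n.
Qed.

Lemma leN (a b : nat) : (a%:R / N%:R <= b%:R / N%:R :> R) = (a <= b)%N.
Proof.
by rewrite ler_pM2r ?ler_nat // invr_gt0 ltr0n.
Qed.

Definition O (k : nat) : set R := `](k%:R / N%:R), (k.+1%:R / N%:R)[.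

Lemma gridA (Y : set R) : grid_union N Y ->
  forall k : nat, (O k `<=` Y) \/ (O k `&` Y = set0).
Proof.
move=> [m [lo [hi [bl [br [Hg ->]]]]]] k.
case: (pselect (exists y, O k y /\ (\bigcup_(k0 in [set: 'I_m])
   [set x | x \in Interval (BSide (bl k0) (lo k0)) (BSide (br k0) (hi k0))]) y)).
  move=> [y [Oy [k0 _ /= Iy]]]; left => z Oz; exists k0 => //=.
  have [[a [_ ea]] [b [_ eb]]] := Hg k0.
  move: Oy Oz; rewrite /O /= !in_itv /= => /andP[y1 y2] /andP[z1 z2].
  have /andP[h1 h2] := itv_weak Iy.
  apply: itv_strict; apply/andP; split.
    apply: le_lt_trans z1; rewrite ea leN -ltnS -(ltN a).
    by rewrite -ea; apply: le_lt_trans y2.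
  apply: lt_le_trans z2 _; rewrite eb leN -(ltN k).
  by rewrite -eb; apply: lt_le_trans h2.
move=> H; right; apply/seteqP; split => // x [Ox Yx]; exfalso; apply: H; by exists x.
Qed.

Lemma cell_sub (k : 'I_N) (Y : set R) :
  cell k `&` Y `\` O k `<=` [set x | x \in [:: k%:R / N%:R; k.+1%:R / N%:R]].
Proof.
move=> x [[Hc _] HO]; move: Hc; rewrite /cell /= in_itv /= => /andP[h1 h2].
rewrite /= !inE; apply/orP.
case: (eqVneq x (k%:R / N%:R)) => [e|n1]; first by left; apply/eqP.
case: (eqVneq x (k.+1%:R / N%:R)) => [e|n2]; first by right; apply/eqP.
exfalso; apply: HO; rewrite /O /= in_itv /=; apply/andP; split;
  rewrite lt_neqAle ?h1 ?h2 andbT // eq_sym //.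
Qed.

Lemma gridB (Y : set R) (k : 'I_N) :
  measurable Y ->
  (O k `<=` Y -> len (cell k `&` Y) = N%:R^-1) /\
  (O k `&` Y = set0 -> len (cell k `&` Y) = 0).
Proof.
move=> mY.
have mc : measurable (cell (R:=R) k) by rewrite /cell; exact: measurable_itv.
have mO : measurable (O k) by rewrite /O; exact: measurable_itv.
have /fin_null [mS lS] := @cell_sub k Y.
have lO : lebesgue_measure (O k) = (N%:R^-1)%:E.
  rewrite leb_oo ?ltN // -mulrBl -natrB // subSnn mul1r //.
split => [sub|disj].
  have eS : cell k `&` Y = O k `|` (cell k `&` Y `\` O k).
    apply/seteqP; split => x.
      by move=> Hx; case: (pselect (O k x)) => h; [left|right].
    move=> [Ox|[]//]; split => //; last exact: sub.
    move: Ox; rewrite /O /cell /= !in_itv /= => /andP[h1 h2].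
    by rewrite (ltW h1) (ltW h2).
  rewrite /len /leb; have -> : lebesgue_measure (cell k `&` Y) = (N%:R^-1)%:E.
    apply/eqP; rewrite eq_le; apply/andP; split.
      rewrite eS; apply: (le_trans (measureU2 _ _ _)) => //.
      by move: lS => /= ->; rewrite adde0 lO.
    rewrite -lO; apply: le_measure; rewrite ?inE //.
      exact: measurableI.
    by rewrite eS => x Ox; left.
  by [].
have eS : cell k `&` Y = (cell k `&` Y `\` O k).
  apply/seteqP; split => x; last by case.
  move=> H; split => // Ox.
  have : (O k `&` Y) x by split => //; case: H.
  by rewrite disj.
by rewrite /len /leb eS; move: lS => /= ->.
Qed.


Lemma grid_meas (Y : set R) : grid_union N Y -> measurable Y.
Proof.
move=> [m [lo [hi [bl [br [_ ->]]]]]].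
apply: fin_bigcup_measurable; first exact: finite_finset.
move=> k _; exact: measurable_itv.
Qed.

End Aux.
Arguments fin_null {R s S}.
Arguments ltN {R N}.
Arguments leN {R N}.
Arguments O {R}.
Arguments grid_meas {R N Y}.
Arguments gridA {R N} N0 {Y}.

Lemma findk (P : nat -> bool) n : P 0%N -> ~~ P n ->
  exists k, [/\ (k < n)%N, P k & ~~ P k.+1].
Proof.
elim: n => [->//|n IH] P0 Pn.
case Pn' : (P n); first by exists n.
have [k [kn Pk Pk1]] := IH P0 (negbT Pn'); exists k; split => //.
exact: ltnW.
Qed.

Lemma key (R : realType) (l : nat) (Lam : 'I_l -> nat) (T : R -> R) (N : nat)
  (i j : 'I_N) :
  condition1 Lam T N -> Bmat T j i != 0 ->
  exists x, O N j x /\ O N i (T x).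
Proof.
move=> [HL Hsum _ HT [N0 Hgrid]] HB.
have brk0 : brk R Lam 0 = 0 :> R by rewrite /brk big1 // => k; rewrite ltn0.
have brkl : brk R Lam l = 1 :> R.
  by rewrite /brk -[RHS]Hsum; apply: eq_bigl => k; rewrite ltn_ord.
pose P m := brk R Lam m <= j%:R / N%:R :> R.
have P0 : P 0%N by rewrite /P brk0 divr_ge0.
have Pl : ~~ P l.
  rewrite /P brkl -ltNge ltr_pdivrMr ?ltr0n // mul1r ltr_nat; exact: ltn_ord.
have [k0 [k0l Pk Pk1]] := findk _ _ P0 Pl.
pose k := Ordinal k0l.
have hk1 : j.+1%:R / N%:R <= brk R Lam k.+1 :> R.
  have [b [_ eb]] := Hgrid k.+1 k0l.
  move: Pk1; rewrite /P -ltNge eb (ltN N0) (leN N0) //.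
pose L : R := (Lam k)%:R.
have L0 : L != 0 by rewrite pnatr_eq0 -lt0n; apply: leq_trans (HL k).
pose p c : R := brk R Lam k + (c%:R / N%:R) / L.
apply: contra_neqP HB => H.
have sub : cell j `&` (T @^-1` cell i) `<=`
   [set x | x \in [:: j%:R / N%:R; j.+1%:R / N%:R; p i; p i.+1]].
  move=> x [Cx CTx]; rewrite /= !inE.
  case: (eqVneq x (j%:R / N%:R)) => [->|n1]; first by [].
  case: (eqVneq x (j.+1%:R / N%:R)) => [->|n2]; first by rewrite /= ?orbT.
  move: Cx; rewrite /cell /= in_itv /= => /andP[h1 h2].
  have x1 : j%:R / N%:R < x by rewrite lt_neqAle h1 andbT eq_sym.
  have x2 : x < j.+1%:R / N%:R by rewrite lt_neqAle h2 andbT.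
  have Tx : T x = L * (x - brk R Lam k).
    apply: HT; apply/andP; split.
      exact: le_lt_trans Pk x1.
    exact: lt_le_trans x2 hk1.
  have ex c : T x = c%:R / N%:R -> x = p c.
    rewrite Tx /p => e.
    have : x - brk R Lam k = c%:R / N%:R / L by rewrite -e mulrAC divff // mul1r.
    by move=> <-; rewrite addrC subrK.
  move: CTx; rewrite /cell /= in_itv /= => /andP[t1 t2].
  case: (eqVneq (T x) (i%:R / N%:R)) => [/ex ->|m1]; first by rewrite eqxx /= ?orbT.
  case: (eqVneq (T x) (i.+1%:R / N%:R)) => [/ex ->|m2]; first by rewrite eqxx /= ?orbT.
  exfalso; apply: H; exists x; split; rewrite /O /= in_itv /=; apply/andP; split => //.
    by rewrite lt_neqAle t1 andbT eq_sym.
  by rewrite lt_neqAle t2 andbT.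
have [_ l0] := fin_null sub.
by rewrite /Bmat /len /leb l0 /= mul0r.
Qed.


Local Open Scope complex_scope.

Theorem proposition2 (R : realType) (l : nat) (Lam : 'I_l -> nat) (T : R -> R)
  (N : nat) (U : 'M[R[i]]_N) (X : set R) :
  condition1 Lam T N ->
  quantization T U ->
  X `<=` `[0, 1] ->
  grid_union N X ->
  grid_union N (preimT T X) ->
  invmx U *m Pproj N X *m U = Pproj N (preimT T X).
Proof.
move=> C1 [Uu HU] _ gX gP.
have N0 : (0 < N)%N by case: C1 => _ _ _ _ [].
have mX := grid_meas gX.
have mP := grid_meas gP.
have Hcomm : Pproj N X *m U = U *m Pproj N (preimT T X).
  apply/matrixP => a b; rewrite mul_diag_mx mul_mx_diag !mxE.
  case: (eqVneq (U a b) 0) => [->|Hab]; first by rewrite mulr0 mul0r.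
  rewrite mulrC; congr (_ * _); congr (_%:C); congr (_ * _).
  have HB : Bmat T b a != 0.
    apply: contraNneq Hab => HB0.
    have := HU a b; rewrite HB0 => h.
    have /eqP : `|U a b| ^+ 2 = 0 by rewrite h.
    by rewrite expf_eq0 /= normr_eq0.
  have [x [Ox OTx]] := @key R l Lam T N a b C1 HB.
  have x01 : 0 <= x <= 1.
    move: Ox; rewrite /O /= !in_itv /= => /andP[h1 h2]; apply/andP; split.
      by apply: le_trans (ltW h1); rewrite divr_ge0.
    apply: (le_trans (ltW h2)); rewrite ler_pdivrMr ?ltr0n // mul1r ler_nat.
    exact: ltn_ord.
  have [A1 A2] := @gridB R N N0 X a mX.
  have [B1 B2] := @gridB R N N0 _ b mP.
  case: (gridA N0 gX a) => hX; case: (gridA N0 gP b) => hP.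
  - by rewrite A1 // B1.
  - exfalso; have : (O N b `&` preimT T X) x by split => //; split; [rewrite /= in_itv /= | exact: hX].
    by rewrite hP.
  - exfalso; have [_ XTx] := hP _ Ox.
    have : (O N a `&` X) (T x) by split.
    by rewrite hX.
  - by rewrite A2 // B2.
have [_ Uunit] := mulmx1_unit Uu.
by rewrite -mulmxA Hcomm mulmxA mulVmx // mul1mx.
Qed.
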